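(* Let $X$ be a geodesic $\delta$--hyperbolic space ($\delta\geqslant 0$), let $g$ be an isometry of $X$ and let $x,y\in X$. If $m_1$ is the midpoint of a geodesic segment $[x,gx]$ and $m_2$ is the midpoint of a geodesic segment $[y,gy]$, then every geodesic segment $[m_1,m_2]$ is contained in $C_g^{+70\delta}$.
   Context: Distances are written $|x-y|$; Gromov product $(p,q)_x:=\frac12(|p-x|+|q-x|-|p-q|)$; $X$ is $\delta$--hyperbolic if $(p,r)_x\geqslant \min\{(p,q)_x,(q,r)_x\}-\delta$ for all $p,q,r,x$. For an isometry $g$, its translation length is $[g]:=\inf_{x\in X}|gx-x|$ and $C_g:=\{x\in X\mid |gx-x|\leqslant [g]+8\delta\}$. For $A\subset X$ and $a\geqslant 0$, $A^{+a}:=\{x\in X\mid d(x,A)\leqslant a\}$. *)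

(* Defs.v *)
From Stdlib Require Import Reals.
From Coquelicot Require Import Coquelicot.
Open Scope R_scope.

Record MetricSpace := {
  pt :> Type;
  dist : pt -> pt -> R;
  dist_nonneg : forall x y, 0 <= dist x y;
  dist_eq0 : forall x y, dist x y = 0 <-> x = y;
  dist_sym : forall x y, dist x y = dist y x;
  dist_tri : forall x y z, dist x z <= dist x y + dist y z
}.

Section Defs.
Variable X : MetricSpace.
Local Notation d := (dist X).

Definition gromov (p q x : X) : R := (d p x + d q x - d p q) / 2.

Definition hyperbolic (delta : R) : Prop :=
  forall p q r x : X,
    gromov p r x >= Rmin (gromov p q x) (gromov q r x) - delta.

Definition geodesic (x y : X) (gam : R -> X) : Prop :=
  gam 0 = x /\ gam (d x y) = y /\
  forall s t, 0 <= s <= d x y -> 0 <= t <= d x y -> d (gam s) (gam t) = Rabs (s - t).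

Definition segment (x y : X) (gam : R -> X) : X -> Prop :=
  fun z => exists t, 0 <= t <= d x y /\ z = gam t.

Definition midpoint (x y : X) (gam : R -> X) : X := gam (d x y / 2).

Definition geodesic_space : Prop :=
  forall x y : X, exists gam, geodesic x y gam.

Definition isometry (g : X -> X) : Prop :=
  (forall x y, d (g x) (g y) = d x y) /\ (forall y, exists x, g x = y).

Definition transl_len (g : X -> X) : R :=
  real (Glb_Rbar (fun r => exists x : X, r = d (g x) x)).

Definition C_set (delta : R) (g : X -> X) : X -> Prop :=
  fun x => d (g x) x <= transl_len g + 8 * delta.

(* A^{+a} := { x | d(x,A) <= a }, d(x,A) = inf_{z in A} |x - z| (= +oo if A empty) *)
Definition nbhd (A : X -> Prop) (a : R) : X -> Prop :=
  fun x => Rbar_le (Glb_Rbar (fun r => exists z, A z /\ r = d x z)) (Finite a).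

End Defs.

(* Main.v *)
Require Import Defs.
From Stdlib Require Import Reals Lra.
From Coquelicot Require Import Coquelicot.
Open Scope R_scope.

Section Helpers.
Variable X : MetricSpace.
Variable delta : R.
Variable g : X -> X.
Hypothesis Hd : 0 <= delta.
Hypothesis Hh : hyperbolic X delta.
Hypothesis Hg : forall a b, Defs.dist X (g a) (g b) = Defs.dist X a b.

Local Notation d := (Defs.dist X).

Lemma hyp4 p q r x : gromov X p r x + delta >= gromov X p q x \/
                     gromov X p r x + delta >= gromov X q r x.
Proof.
  pose proof (Hh p q r x) as H. unfold Rmin in H.
  destruct (Rle_dec (gromov X p q x) (gromov X q r x)); [left|right]; lra.
Qed.

Lemma gromov_nonneg a b o : 0 <= gromov X a b o.
Proof.
  unfold gromov. pose proof (Defs.dist_tri X a o b). pose proof (Defs.dist_sym X o b). lra.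
Qed.

Lemma proj p q z r s : d z p = s -> d z q = d p q - s ->
  d r z <= d r p - s + 2*delta \/ d r z <= d r q - (d p q - s) + 2*delta.
Proof.
  intros H1 H2.
  pose proof (Defs.dist_sym X p z). pose proof (Defs.dist_sym X q z).
  pose proof (Defs.dist_sym X r z). pose proof (Defs.dist_sym X p r). pose proof (Defs.dist_sym X r q).
  destruct (hyp4 p r q z) as [K|K]; unfold gromov in K; [left|right]; lra.
Qed.

Lemma S2 o a b p q s1 s2 m :
  d o p = s1 -> d p a = d o a - s1 -> d o q = s2 -> d q b = d o b - s2 ->
  m <= s1 -> m <= s2 -> m <= gromov X a b o -> d p q <= s1 + s2 - 2*m + 4*delta.
Proof.
  intros H1 H2 H3 H4 H5 H6 H7.
  pose proof (Defs.dist_sym X p o). pose proof (Defs.dist_sym X a o).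
  pose proof (Defs.dist_sym X q o). pose proof (Defs.dist_sym X b o).
  pose proof (Defs.dist_sym X b q). pose proof (Defs.dist_sym X a p).
  destruct (hyp4 p a q o) as [K|K]; destruct (hyp4 a b q o) as [K'|K'];
  unfold gromov in *; lra.
Qed.

Lemma iter_iso n a b : d (Nat.iter n g a) (Nat.iter n g b) = d a b.
Proof. induction n; simpl; [reflexivity | rewrite Hg; auto]. Qed.

Lemma iter_comm n a : Nat.iter n g (g a) = g (Nat.iter n g a).
Proof. induction n; simpl; congruence. Qed.

Lemma dist_self a : d a a = 0.
Proof. apply (proj2 (Defs.dist_eq0 X a a)); reflexivity. Qed.

Lemma iter_disp n u : d u (Nat.iter n g u) <= INR n * d u (g u).
Proof.
  induction n.
  - simpl. rewrite dist_self. lra.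
  - change (Nat.iter (S n) g u) with (g (Nat.iter n g u)).
    pose proof (Defs.dist_tri X u (Nat.iter n g u) (g (Nat.iter n g u))).
    assert (E : d (Nat.iter n g u) (g (Nat.iter n g u)) = d u (g u))
      by (rewrite <- iter_comm, iter_iso; reflexivity).
    rewrite S_INR. lra.
Qed.

Lemma gromov_iter k a b c :
  gromov X (Nat.iter k g a) (Nat.iter k g b) (Nat.iter k g c) = gromov X a b c.
Proof. unfold gromov. rewrite !iter_iso. reflexivity. Qed.

Lemma chain x :
  d x (g x) > 2 * gromov X x (g (g x)) (g x) + 2*delta ->
  forall n, d x (Nat.iter (S n) g x) >=
     INR (S n) * d x (g x) - 2 * INR n * (gromov X x (g (g x)) (g x) + delta) /\
     gromov X x (Nat.iter (S (S n)) g x) (Nat.iter (S n) g x)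
       <= gromov X x (g (g x)) (g x) + delta.
Proof.
  set (L := d x (g x)). set (t := gromov X x (g (g x)) (g x)). intros HL n.
  induction n.
  - change (Nat.iter 1 g x) with (g x). change (Nat.iter 2 g x) with (g (g x)).
    simpl INR. fold t. unfold L. split; lra.
  - set (A := Nat.iter (S n) g x) in *.
    change (Nat.iter (S (S n)) g x) with (g A) in *.
    change (Nat.iter (S (S (S n))) g x) with (g (g A)).
    destruct IHn as [I1 I2].
    assert (EA : d A (g A) = L).
    { unfold A, L. rewrite <- iter_comm, iter_iso. reflexivity. }
    assert (EB : d (g A) (g (g A)) = L) by (rewrite Hg; exact EA).
    assert (Et : gromov X A (g (g A)) (g A) = t).
    { unfold A, t. rewrite <- !iter_comm. apply gromov_iter. }
    pose proof (gromov_nonneg x (g (g x)) (g x)) as Ht. fold t in Ht.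
    pose proof (Defs.dist_sym X A (g A)). pose proof (Defs.dist_sym X x A).
    pose proof (Defs.dist_sym X (g A) A). pose proof (Defs.dist_sym X x (g A)).
    pose proof (Defs.dist_sym X (g (g A)) (g A)).
    destruct (hyp4 A x (g (g A)) (g A)) as [K|K];
    rewrite Et in K; unfold gromov in *; rewrite !S_INR in *; split; lra.
Qed.

Lemma S1 x u : d x (g (g x)) - d x (g x) - 2*delta <= d u (g u).
Proof.
  set (L := d x (g x)). set (t := gromov X x (g (g x)) (g x)).
  pose proof (gromov_nonneg x (g (g x)) (g x)) as Ht. fold t in Ht.
  assert (E2 : d x (g (g x)) = 2*L - 2*t).
  { unfold t, L, gromov. rewrite (Defs.dist_sym X (g (g x)) (g x)), Hg.
    rewrite (Defs.dist_sym X x (g x)). lra. }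
  pose proof (Defs.dist_nonneg X u (g u)).
  destruct (Rle_dec L (2*t + 2*delta)) as [Hle|Hgt]; [lra|].
  apply Rnot_le_lt in Hgt.
  destruct (Rle_dec (L - 2*t - 2*delta) (d u (g u))) as [ok|bad]; [lra|].
  apply Rnot_le_lt in bad. exfalso.
  set (E := L - 2*t - 2*delta - d u (g u)).
  assert (HE : 0 < E) by (unfold E; lra).
  destruct (INR_unbounded (2 * d x u / E)) as [n Hn].
  assert (Hn' : INR n * E > 2 * d x u).
  { assert (2 * d x u / E * E = 2 * d x u) by (field; lra).
    pose proof (Rmult_lt_compat_r E _ _ HE Hn). lra. }
  destruct (chain x Hgt n) as [C1 _]. fold L t in C1.
  pose proof (Defs.dist_tri X x u (Nat.iter (S n) g x)).
  pose proof (Defs.dist_tri X u (Nat.iter (S n) g u) (Nat.iter (S n) g x)).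
  pose proof (iter_iso (S n) u x).
  pose proof (Defs.dist_sym X u x).
  pose proof (iter_disp (S n) u).
  pose proof (pos_INR n).
  rewrite S_INR in *. unfold E in Hn'. lra.
Qed.

Lemma mid_bound x m u : d m x = d x (g x) / 2 -> d m (g x) = d x (g x) / 2 ->
  d m (g m) <= d u (g u) + 6*delta.
Proof.
  intros H1 H2.
  set (L := d x (g x)) in *. set (t := gromov X x (g (g x)) (g x)).
  pose proof (gromov_nonneg x (g (g x)) (g x)) as Ht. fold t in Ht.
  pose proof (S1 x u) as HS.
  assert (E2 : d x (g (g x)) = 2*L - 2*t).
  { unfold t, L, gromov. rewrite (Defs.dist_sym X (g (g x)) (g x)), Hg.
    rewrite (Defs.dist_sym X x (g x)). lra. }
  fold L in HS. pose proof (Defs.dist_nonneg X u (g u)).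
  assert (Hp1 : d (g x) m = L/2) by (rewrite Defs.dist_sym; exact H2).
  assert (Hp2 : d m x = d (g x) x - L/2) by (rewrite (Defs.dist_sym X (g x) x); fold L; lra).
  assert (Hq1 : d (g x) (g m) = L/2) by (rewrite Hg, Defs.dist_sym; exact H1).
  assert (Hq2 : d (g m) (g (g x)) = d (g x) (g (g x)) - L/2).
  { rewrite !Hg. fold L. lra. }
  destruct (Rle_dec (L/2) t) as [c|c].
  - pose proof (S2 (g x) x (g (g x)) m (g m) (L/2) (L/2) (L/2) Hp1 Hp2 Hq1 Hq2
      (Rle_refl _) (Rle_refl _) c). lra.
  - pose proof (S2 (g x) x (g (g x)) m (g m) (L/2) (L/2) t Hp1 Hp2 Hq1 Hq2
      ltac:(lra) ltac:(lra) (Rle_refl _)). lra.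
Qed.

Lemma fellow p q z s M : d z p = s -> d z q = d p q - s ->
  d p (g p) <= M -> d q (g q) <= M -> d z (g z) <= M + 4*delta.
Proof.
  intros H1 H2 Hp Hq.
  assert (G1 : d (g z) (g p) = s) by (rewrite Hg; auto).
  assert (G2 : d (g z) (g q) = d (g p) (g q) - s) by (rewrite !Hg; auto).
  pose proof (Defs.dist_nonneg X z p). pose proof (Defs.dist_nonneg X z q).
  destruct (proj p q z (g z) s H1 H2) as [A|A];
  destruct (proj (g p) (g q) (g z) p s G1 G2) as [B|B];
  destruct (proj (g p) (g q) (g z) q s G1 G2) as [C|C];
  pose proof (Defs.dist_tri X p q (g q)); pose proof (Defs.dist_tri X q p (g p));
  pose proof (Defs.dist_sym X (g z) z); pose proof (Defs.dist_sym X (g z) p);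
  pose proof (Defs.dist_sym X (g z) q); pose proof (Defs.dist_sym X p q);
  pose proof (Defs.dist_sym X p (g p)); pose proof (Defs.dist_sym X q (g q));
  rewrite Hg in *; lra.
Qed.


Lemma geo_pt a b c tau : geodesic X a b c -> 0 <= tau <= d a b ->
  d (c tau) a = tau /\ d (c tau) b = d a b - tau.
Proof.
  intros [H0 [H1 H2]] Ht.
  pose proof (H2 tau 0 Ht ltac:(pose proof (Defs.dist_nonneg X a b); lra)) as A.
  pose proof (H2 tau (d a b) Ht ltac:(pose proof (Defs.dist_nonneg X a b); lra)) as B.
  rewrite H0 in A. rewrite H1 in B. split.
  - rewrite A. rewrite Rminus_0_r. apply Rabs_pos_eq. lra.
  - rewrite B. rewrite Rabs_minus_sym. apply Rabs_pos_eq. lra.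
Qed.

Lemma key m1 m2 z tau : geodesic_space X ->
  (forall u, d m1 (g m1) <= d u (g u) + 6*delta) ->
  (forall u, d m2 (g m2) <= d u (g u) + 6*delta) ->
  d z m1 = tau -> d z m2 = d m1 m2 - tau ->
  exists w, d z w <= 70*delta /\ forall u, d w (g w) <= d u (g u) + 8*delta.
Proof.
  intros Hgeo A1 A2 Hz1 Hz2.
  assert (ZB : forall u, d z (g z) <= d u (g u) + 10*delta).
  { intros u. pose proof (fellow m1 m2 z tau (d u (g u) + 6*delta) Hz1 Hz2 (A1 u) (A2 u)). lra. }
  destruct (Hgeo z (g z)) as [c Hc].
  set (L := d z (g z)) in *. set (t := gromov X z (g (g z)) (g z)).
  pose proof (gromov_nonneg z (g (g z)) (g z)) as Ht. fold t in Ht.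
  assert (E2 : d z (g (g z)) = 2*L - 2*t).
  { unfold t, L, gromov. rewrite (Defs.dist_sym X (g (g z)) (g z)), Hg.
    rewrite (Defs.dist_sym X z (g z)). lra. }
  assert (HL : 0 <= L) by apply Defs.dist_nonneg.
  assert (EL : d (g z) (g (g z)) = L) by (rewrite Hg; reflexivity).
  assert (EL' : d (g z) z = L) by (rewrite Defs.dist_sym; reflexivity).
  destruct (geo_pt z (g z) c (L/2) Hc ltac:(fold L; lra)) as [M1 M2]. fold L in M1, M2.
  set (m := c (L/2)) in *.
  assert (Mb : d m (g m) <= L - 2 * Rmin (L/2) t + 4*delta).
  { eapply Rle_trans; [apply (S2 (g z) z (g (g z)) m (g m) (L/2) (L/2) (Rmin (L/2) t))|lra].
    - rewrite Defs.dist_sym. lra.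
    - rewrite EL'. lra.
    - rewrite Hg, Defs.dist_sym. exact M1.
    - rewrite Hg, EL. lra.
    - apply Rmin_l. - apply Rmin_l. - apply Rmin_r. }
  pose proof (ZB m) as Zm. fold L in Zm.
  destruct (Rle_dec (L/2) t) as [c1|c1].
  - rewrite Rmin_left in Mb by lra.
    exists m. split.
    + rewrite Defs.dist_sym, M1. lra.
    + intros u. pose proof (Defs.dist_nonneg X u (g u)). lra.
  - rewrite Rmin_right in Mb by lra.
    destruct (geo_pt z (g z) c t Hc ltac:(fold L; lra)) as [W1 W2]. fold L in W1, W2.
    exists (c t). split.
    + rewrite Defs.dist_sym, W1. lra.
    + intros u.
      assert (Wb : d (c t) (g (c t)) <= (L - t) + t - 2*t + 4*delta).
      { assert (F1 : d (g z) (c t) = L - t) by (rewrite Defs.dist_sym; lra).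
        assert (F2 : d (c t) z = d (g z) z - (L - t)) by (rewrite EL'; lra).
        assert (F3 : d (g z) (g (c t)) = t) by (rewrite Hg, Defs.dist_sym; exact W1).
        assert (F4 : d (g (c t)) (g (g z)) = d (g z) (g (g z)) - t) by (rewrite Hg, EL; lra).
        apply (S2 (g z) z (g (g z)) (c t) (g (c t)) (L - t) t t F1 F2 F3 F4); fold t; lra. }
      pose proof (S1 z u). fold L in H. lra.
Qed.

End Helpers.


Lemma into_C (X : MetricSpace) delta g w :
  (forall u, Defs.dist X w (g w) <= Defs.dist X u (g u) + 8*delta) -> C_set X delta g w.
Proof.
  intros H. unfold C_set, transl_len.
  set (S := fun r => exists x : X, r = Defs.dist X (g x) x).
  destruct (Glb_Rbar_correct S) as [lb glb].
  assert (L1 : Rbar_le (Glb_Rbar S) (Defs.dist X (g w) w)) by (apply lb; exists w; reflexivity).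
  assert (L2 : Rbar_le (Defs.dist X (g w) w - 8*delta) (Glb_Rbar S)).
  { apply glb. intros r [u ->]. simpl. pose proof (H u).
    rewrite (Defs.dist_sym X (g w) w), (Defs.dist_sym X (g u) u). lra. }
  destruct (Glb_Rbar S) as [r| |]; simpl in *; try contradiction. lra.
Qed.

Lemma nbhd_of (X : MetricSpace) (A : X -> Prop) a z w :
  A w -> Defs.dist X z w <= a -> nbhd X A a z.
Proof.
  intros Aw Hw. unfold nbhd.
  destruct (Glb_Rbar_correct (fun r => exists z0, A z0 /\ r = Defs.dist X z z0)) as [lb _].
  eapply Rbar_le_trans; [apply lb; exists w; split; [exact Aw|reflexivity] | simpl; exact Hw].
Qed.

Theorem lemma2p15 (X : MetricSpace) (delta : R) (g : X -> X) (x y : X)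
  (gam1 gam2 : R -> X) :
  0 <= delta ->
  geodesic_space X ->
  hyperbolic X delta ->
  isometry X g ->
  geodesic X x (g x) gam1 ->
  geodesic X y (g y) gam2 ->
  forall gam : R -> X,
    geodesic X (midpoint X x (g x) gam1) (midpoint X y (g y) gam2) gam ->
    forall z : X,
      segment X (midpoint X x (g x) gam1) (midpoint X y (g y) gam2) gam z ->
      nbhd X (C_set X delta g) (70 * delta) z.
Proof.
  intros Hd Hgeo Hh [Hg _] G1 G2 gam G z [tau [Htau ->]].
  assert (Mid : forall a c, geodesic X a (g a) c ->
     forall u, Defs.dist X (midpoint X a (g a) c) (g (midpoint X a (g a) c))
       <= Defs.dist X u (g u) + 6*delta).
  { intros a c Gc u. unfold midpoint.
    pose proof (Defs.dist_nonneg X a (g a)).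
    destruct (geo_pt X a (g a) c (Defs.dist X a (g a) / 2) Gc ltac:(lra)) as [P1 P2].
    apply (mid_bound X delta g Hd Hh Hg a); [exact P1 | lra]. }
  destruct (geo_pt X _ _ gam tau G Htau) as [Z1 Z2].
  destruct (key X delta g Hd Hh Hg _ _ _ tau Hgeo (Mid x gam1 G1) (Mid y gam2 G2) Z1 Z2)
    as [w [Hw1 Hw2]].
  apply (nbhd_of X _ _ _ w); [apply into_C; exact Hw2 | exact Hw1].
Qed.
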